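(* Let $\mathfrak M\models S_{\overline\alpha}$. Assume that $d_{\mathfrak M}(\mathfrak A)=0$ for every finite $\mathfrak A\subseteq\mathfrak M$ and that $\mathfrak M$ has finite closures. Then $\mathfrak M$ is atomic.
   Context: Fix a finite relational language $L$ in which every relation symbol has arity at least $2$. $K_L$ is the class of all finite $L$-structures (including the empty one) in which every relation symbol is interpreted symmetrically and irreflexively. Fix $\overline\alpha:L\to(0,1]$, writing $\overline\alpha_E=\overline\alpha(E)$, such that it is not the case that all symbols of $L$ are binary and $\overline\alpha_E=1$ for all $E$. For $\mathfrak A\in K_L$ let $N_E(\mathfrak A)$ be the number of subsets of $A$ on which $E$ holds and $\delta(\mathfrak A)=|A|-\sum_{E}\overline\alpha_E N_E(\mathfrak A)$; subsets of a structure are identified with induced substructures. $K_{\overline\alpha}=\{\mathfrak A\in K_L:\delta(\mathfrak A')\ge0\text{ for all substructures }\mathfrak A'\subseteq\mathfrak A\}$. For $\mathfrak A\subseteq\mathfrak B$ in $K_L$, $\mathfrak A\le\mathfrak B$ means $\delta(\mathfrak A)\le\delta(\mathfrak A')$ for all $\mathfrak A\subseteq\mathfrak A'\subseteq\mathfrak B$; for finite $\mathfrak A\subseteq\mathfrak M$, $\mathfrak A\le\mathfrak M$ means $\mathfrak A\le\mathfrak B$ for every finite $\mathfrak A\subseteq\mathfrak B\subseteq\mathfrak M$. $S_{\overline\alpha}$ is the theory whose models $\mathfrak M$ are those in which every finite substructure lies in $K_{\overline\alpha}$ and, for all $\mathfrak A\le\mathfrak B$ in $K_{\overline\alpha}$,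 every embedding $\mathfrak A\to\mathfrak M$ extends to an embedding $\mathfrak B\to\mathfrak M$. $\mathfrak M$ has finite closures if every finite $\mathfrak A\subseteq\mathfrak M$ is contained in a finite $\mathfrak B\subseteq\mathfrak M$ with $\mathfrak B\le\mathfrak M$. $d_{\mathfrak M}(\mathfrak A)=\inf\{\delta(\mathfrak B):\mathfrak A\subseteq\mathfrak B,\ \mathfrak B\text{ finite},\ \mathfrak B\le\mathfrak M\}$. *)

(* Defs.v *)
From HB Require Import structures.
From mathcomp Require Import all_boot all_order all_algebra all_fingroup.
From mathcomp Require Import finmap.
From mathcomp Require Import boolp classical_sets reals Rstruct.
From Stdlib Require Import Reals.

Unset Implicit Arguments.
Unset Printing Implicit Defensive.

Import Order.TTheory GRing.Theory Num.Theory.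
Local Open Scope fset_scope.
Local Open Scope ring_scope.

Section Hrushovski.

Variable L : finType.
Variable ar : L -> nat.
Variable alpha : L -> R.

Definition interp (T : choiceType) := forall E : L, ('I_(ar E) -> T) -> bool.

Section Finite.
Variables (T : choiceType) (r : interp T).

(* The induced substructure on the finite set A is in K_L: every relation is
   symmetric (invariant under permuting arguments) and irreflexive (holds only
   on tuples of pairwise distinct elements). *)
Definition in_KL (A : {fset T}) : Prop :=
  forall (E : L) (t : 'I_(ar E) -> T), (forall i, t i \in A) ->
    (forall s : {perm 'I_(ar E)}, r E (fun i => t (s i)) = r E t) /\
    (r E t -> injective t).

Definition holds_on (E : L) (S : {fset T}) : bool :=
  [exists t : {ffun 'I_(ar E) -> S}, injectiveb t && r E (fun i => val (t i))].

Definition N_E (E : L) (A : {fset T}) : nat :=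
  #|` [fset S in fpowerset A | (#|` S| == ar E) && holds_on E S]|.

Definition delta (A : {fset T}) : R :=
  (#|` A|)%:R - \sum_(E : L) alpha E * (N_E E A)%:R.

Definition in_Kalpha (A : {fset T}) : Prop :=
  in_KL A /\ forall A' : {fset T}, A' `<=` A -> 0 <= delta A'.

Definition strong (A B : {fset T}) : Prop :=
  A `<=` B /\ forall A' : {fset T}, A `<=` A' -> A' `<=` B -> delta A <= delta A'.

Definition strongM (A : {fset T}) : Prop :=
  forall B : {fset T}, A `<=` B -> strong A B.

Definition finite_closures : Prop :=
  forall A : {fset T}, exists B : {fset T}, A `<=` B /\ strongM B.

Definition dM (A : {fset T}) : R :=
  inf [set delta B | B in [set B : {fset T} | A `<=` B /\ strongM B]].

End Finite.

Definition embeds (T M : choiceType) (r : interp T) (rM : interp M)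
  (A : {fset T}) (f : T -> M) : Prop :=
  {in A &, injective f} /\
  forall (E : L) (t : 'I_(ar E) -> T), (forall i, t i \in A) ->
    rM E (fun i => f (t i)) = r E t.

(* (M, rM) is a model of S_alpha. Finite structures B (with substructure A)
   are represented as finite subsets of an arbitrary L-structure (T, r). *)
Definition model_S (M : choiceType) (rM : interp M) : Prop :=
  (forall A : {fset M}, in_Kalpha M rM A) /\
  forall (T : choiceType) (r : interp T) (A B : {fset T}),
    in_Kalpha T r B -> strong T r A B ->
    forall f : T -> M, embeds T M r rM A f ->
      exists g : T -> M, embeds T M r rM B g /\ {in A, g =1 f}.

Inductive form : Type :=
  | FEq : nat -> nat -> form
  | FRel : forall E : L, ('I_(ar E) -> nat) -> form
  | FNot : form -> form
  | FAnd : form -> form -> form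
  | FEx : nat -> form -> form.

Fixpoint fv (phi : form) : seq nat :=
  match phi with
  | FEq i j => [:: i; j]
  | FRel E v => map v (enum 'I_(ar E))
  | FNot p => fv p
  | FAnd p q => fv p ++ fv q
  | FEx x p => filter (predC1 x) (fv p)
  end.

Fixpoint sat (M : choiceType) (rM : interp M) (s : nat -> M) (phi : form)
  : Prop :=
  match phi with
  | FEq i j => s i = s j
  | FRel E v => rM E (fun k => s (v k))
  | FNot p => ~ sat M rM s p
  | FAnd p q => sat M rM s p /\ sat M rM s q
  | FEx x p => exists m : M, sat M rM (fun i => if i == x then m else s i) p
  end.

Definition fv_lt (n : nat) (phi : form) : bool := all (fun i : nat => ltn i n) (fv phi).

(* M is atomic: for every n-tuple (the values s 0, ..., s (n-1)), its complete
   type over the empty set is isolated, i.e. some formula phi(x_0..x_(n-1))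
   true of the tuple implies in M every formula psi(x_0..x_(n-1)) true of it. *)
Definition atomic (M : choiceType) (rM : interp M) : Prop :=
  forall (n : nat) (s : nat -> M),
    exists phi : form, fv_lt n phi /\ sat M rM s phi /\
      forall psi : form, fv_lt n psi -> sat M rM s psi ->
        forall s' : nat -> M, sat M rM s' phi -> sat M rM s' psi.

End Hrushovski.

Arguments interp {L} ar T.
Arguments in_KL {L ar T} r A.
Arguments holds_on {L ar T} r E S.
Arguments N_E {L ar T} r E A.
Arguments delta {L ar} alpha {T} r A.
Arguments in_Kalpha {L ar} alpha {T} r A.
Arguments strong {L ar} alpha {T} r A B.
Arguments strongM {L ar} alpha {T} r A.
Arguments finite_closures {L ar} alpha {T} r.
Arguments dM {L ar} alpha {T} r A.
Arguments embeds {L ar T M} r rM A f.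
Arguments model_S {L ar} alpha {M} rM.
Arguments form {L} ar.
Arguments fv {L ar} phi.
Arguments sat {L ar M} rM s phi.
Arguments fv_lt {L ar} n phi.
Arguments atomic {L ar M} rM.

(* Main.v *)
Require Import Defs.
From HB Require Import structures.
From mathcomp Require Import all_boot all_order all_algebra all_fingroup.
From mathcomp Require Import finmap.
From mathcomp Require Import boolp classical_sets reals Rstruct.
From Stdlib Require Import Reals.
From mathcomp Require Import zify.
Import Order.TTheory GRing.Theory Num.Theory.
Local Open Scope fset_scope.
Local Open Scope ring_scope.



Section S.
Variables (L : finType) (ar : L -> nat) (alpha : L -> R).
Hypothesis apos : forall E, 0 <= alpha E.
Variables (M : choiceType) (rM : interp ar M).

Definition FE (E : L) (A : {fset M}) :=
  [fset S in fpowerset A | (#|` S| == ar E) && holds_on rM E S].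

Lemma FEP E A S : (S \in FE E A) = [&& S `<=` A, #|` S| == ar E & holds_on rM E S].
Proof. by rewrite /FE !inE /= fpowersetE. Qed.

Lemma FE_U E X Y : FE E X `|` FE E Y `<=` FE E (X `|` Y).
Proof.
apply/fsubsetP => S; rewrite in_fsetU !FEP.
case/orP => /and3P[h1 -> ->]; rewrite !andbT.
  by rewrite (fsubset_trans h1) // fsubsetUl.
by rewrite (fsubset_trans h1) // fsubsetUr.
Qed.

Lemma FE_I E X Y : FE E X `&` FE E Y `<=` FE E (X `&` Y).
Proof.
apply/fsubsetP => S; rewrite in_fsetI !FEP.
case/andP => /and3P[h1 -> ->] /and3P[h3 _ _]; rewrite !andbT.
by rewrite fsubsetI h1 h3.
Qed.

Lemma NE_sub E X Y : leq (addn (N_E rM E X) (N_E rM E Y)) (addn (N_E rM E (X `|` Y)) (N_E rM E (X `&` Y))).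
Proof.
have -> : N_E rM E X = #|` FE E X| by [].
have -> : N_E rM E Y = #|` FE E Y| by [].
have -> : N_E rM E (X `|` Y) = #|` FE E (X `|` Y)| by [].
have -> : N_E rM E (X `&` Y) = #|` FE E (X `&` Y)| by [].
rewrite -cardfsUI; apply: leq_add; apply: fsubset_leq_card.
  exact: FE_U. exact: FE_I.
Qed.

Lemma delta_submod X Y :
  delta alpha rM (X `|` Y) + delta alpha rM (X `&` Y) <= delta alpha rM X + delta alpha rM Y.
Proof.
rewrite /delta.
have hc : (#|` X `|` Y|)%:R + (#|` X `&` Y|)%:R = (#|` X|)%:R + (#|` Y|)%:R :> R.
  by rewrite -!natrD cardfsUI.
have hs : \sum_E alpha E * (N_E rM E X)%:R + \sum_E alpha E * (N_E rM E Y)%:R <=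
   \sum_E alpha E * (N_E rM E (X `|` Y))%:R + \sum_E alpha E * (N_E rM E (X `&` Y))%:R.
  rewrite -!big_split /=; apply: ler_sum => E _.
  rewrite -!mulrDr; apply: ler_wpM2l => //; rewrite -!natrD ler_nat; exact: NE_sub.
by rewrite addrACA [X in _ <= X]addrACA hc -!opprD lerD2l lerN2.
Qed.

Lemma card_inj (T U : choiceType) (f : T -> U) (A : {fset T}) : {in A &, injective f} -> #|` f @` A| = #|` A|.
Proof. by move/card_in_imfsetP/eqP. Qed.

Lemma holds_emb (f : M -> M) (B S : {fset M}) E :
  embeds rM rM B f -> S `<=` B -> holds_on rM E S -> holds_on rM E (f @` S).
Proof.
move=> [finj frel] SB /existsP [t /andP [tinj tr]].
have hin : forall i, f (val (t i)) \in f @` S by move=> i; apply: in_imfset; exact: valP.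
apply/existsP; exists [ffun i => [` hin i]]; apply/andP; split.
  apply/injectiveP => i j; rewrite !ffunE => /(congr1 val) /= /finj.
  move=> h; apply: (injectiveP _ tinj); apply: val_inj; apply: h;
  by apply: (fsubsetP SB); apply: valP.
have -> : (fun i => val ([ffun i => [` hin i]] i)) = (fun i => f (val (t i))).
  by apply: funext => i; rewrite ffunE.
rewrite frel //; move=> i; apply: (fsubsetP SB); apply: valP.
Qed.

Lemma NE_emb (f : M -> M) (B : {fset M}) E :
  embeds rM rM B f -> leq (N_E rM E B) (N_E rM E (f @` B)).
Proof.
move=> femb; have [finj _] := femb.
have -> : N_E rM E B = #|` FE E B| by [].
have -> : N_E rM E (f @` B) = #|` FE E (f @` B)| by [].
have inj2 : {in FE E B &, injective (fun S => f @` S)}.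
  move=> S1 S2; rewrite !FEP => /and3P [h1 _ _] /and3P [h2 _ _] e.
  apply/fsetP => x; apply/idP/idP => hx.
    have : f x \in f @` S2 by rewrite -e; apply: in_imfset.
    case/imfsetP => y /= yS2 fxy.
    have -> // : x = y by apply: finj => //; [apply: (fsubsetP h1)|apply: (fsubsetP h2)].
  have : f x \in f @` S1 by rewrite e; apply: in_imfset.
  case/imfsetP => y /= yS1 fxy.
  have -> // : x = y by apply: finj => //; [apply: (fsubsetP h2)|apply: (fsubsetP h1)].
rewrite -(card_inj _ _ _ _ inj2); apply: fsubset_leq_card.
apply/fsubsetP => T /imfsetP [S /= hS ->].
move: hS; rewrite !FEP => /and3P [h1 h2 h3].
have sinj : {in S &, injective f}.
  by move=> x y hx hy; apply: finj; apply: (fsubsetP h1).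
rewrite card_inj // h2 /=; apply/andP; split.
  apply/fsubsetP => y /imfsetP [x /= xS ->]; apply: in_imfset; exact: (fsubsetP h1).
exact: holds_emb femb h1 h3.
Qed.

Lemma delta_emb (f : M -> M) (B : {fset M}) :
  embeds rM rM B f -> delta alpha rM (f @` B) <= delta alpha rM B.
Proof.
move=> femb; have [finj _] := femb.
rewrite /delta card_inj // lerD2l lerN2; apply: ler_sum => E _.
by apply: ler_wpM2l => //; rewrite ler_nat; apply: NE_emb.
Qed.
End S.


Lemma pos_lb (s : seq R) : all (fun x => 0 < x) s -> exists2 e : R, 0 < e & forall x, x \in s -> e <= x.
Proof.
elim: s => [|a s IH] /=; first by move=> _; exists 1 => //.
case/andP => ha /IH [e he hs]; exists (Order.min a e).
  by rewrite lt_min ha he.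
move=> x; rewrite in_cons => /orP [/eqP -> | /hs hx]; rewrite ge_min ?lexx //.
by rewrite hx orbT.
Qed.

Section S2.
Variables (L : finType) (ar : L -> nat) (alpha : L -> R).
Hypothesis apos : forall E, 0 <= alpha E.
Variables (M : choiceType) (rM : interp ar M).
Hypothesis hM : model_S alpha rM.
Hypothesis hd : forall A : {fset M}, dM alpha rM A = 0.
Hypothesis hcl : finite_closures alpha rM.

Local Notation d := (delta alpha rM).

Lemma delta_ge0 A : 0 <= d A.
Proof. by have [_ h] := hM.1 A; apply: h; apply: fsubset_refl. Qed.

Lemma closure_ex A : exists C, A `<=` C /\ d C = 0.
Proof.
have [C0 [AC0 sC0]] := hcl A.
set Ds := [seq D <- enum_fset (fpowerset C0) | A `<=` D].
case: (boolP (has (fun D => d D == 0) Ds)).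
  case/hasP => D; rewrite mem_filter => /andP [AD _] /eqP h; by exists D.
move/hasPn => hn.
have : all (fun x => 0 < x) (map d Ds).
  apply/allP => x /mapP [D hD ->]; have := hn D hD.
  by rewrite lt_neqAle eq_sym delta_ge0 andbT.
case/pos_lb => e he hlb.
have := hd A; rewrite /dM; set S := (X in inf X = 0) => hdA.
have hS : has_inf S.
  split; first by exists (d C0); exists C0.
  by exists 0 => x [B _ <-]; apply: delta_ge0.
have [x [C [AC sC] <-]] := inf_adherent he hS.
rewrite hdA add0r => hlt.
have hD : C `&` C0 \in Ds.
  by rewrite mem_filter fsubsetI AC AC0 /= fpowersetE fsubsetIr.
have h1 := hlb _ (map_f d hD).
have h2 := delta_submod _ _ _ apos _ rM C C0.
have [_ h3] := sC0 (C `|` C0) (fsubsetUr _ _).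
have h4 := h3 (C `|` C0) (fsubsetUr _ _) (fsubset_refl _).
have : d (C `&` C0) < e.
  apply: le_lt_trans hlt.
  have : d (C `|` C0) + d (C `&` C0) <= d C + d (C `|` C0).
    by apply: le_trans h2 _; rewrite lerD2l.
  by rewrite addrC lerD2r.
by rewrite ltNge h1.
Qed.

Definition good (f : M -> M) (B : {fset M}) := d B = 0 /\ embeds rM rM B f.

Lemma strong0 B C : d B = 0 -> B `<=` C -> strong alpha rM B C.
Proof. by move=> h0 BC; split => // A' _ _; rewrite h0 delta_ge0. Qed.

Lemma forth f B m : good f B ->
  exists g C, [/\ good g C, B `<=` C, m \in C & {in B, g =1 f}].
Proof.
move=> [h0 femb].
have [C [hC hC0]] := closure_ex (m |` B).
have BC : B `<=` C by apply: fsubset_trans hC; apply: fsubsetU1.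
have [g [gemb geq]] := hM.2 M rM B C (hM.1 C) (strong0 _ _ h0 BC) f femb.
exists g, C; split => //; apply: (fsubsetP hC); exact: fsetU11.
Qed.

Definition inv (f : M -> M) (B : {fset M}) (y : M) := head y [seq b <- enum_fset B | f b == y].

Lemma invP f B y : y \in f @` B -> inv f B y \in B /\ f (inv f B y) = y.
Proof.
case/imfsetP => b /= hb ->; rewrite /inv.
set l := [seq b0 <- enum_fset B | f b0 == f b].
have hbl : b \in l by rewrite mem_filter eqxx.
have hall : forall c, c \in l -> (f c == f b) && (c \in B) by move=> c; rewrite mem_filter.
case: l hbl hall => [//|b' l'] _ /(_ b' (mem_head _ _)) /andP [/eqP -> ->] //.
Qed.

Lemma back f B : good f B ->
  good (inv f B) (f @` B) /\ {in f @` B, forall y, inv f B y \in B /\ f (inv f B y) = y}.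
Proof.
move=> [h0 femb]; have [finj frel] := femb.
split; last by move=> y; apply: invP.
split.
  by apply/eqP; rewrite eq_le delta_ge0 andbT -h0; apply: delta_emb _ _ _ apos _ rM f B femb.
split.
  move=> y1 y2 /invP [_ e1] /invP [_ e2] e; by rewrite -e1 -e2 e.
move=> E t ht.
have ht' : forall i, inv f B (t i) \in B by move=> i; have [] := invP _ _ _ (ht i).
rewrite -(frel E (fun i => inv f B (t i))) //.
congr (rM E _); apply: funext => i; by have [] := invP _ _ _ (ht i).
Qed.

Lemma transfer (phi : Defs.form ar) : forall s s' f B, good f B ->
  (forall i, i \in fv phi -> s i \in B /\ s' i = f (s i)) ->
  (sat rM s phi <-> sat rM s' phi).
Proof.
elim: phi => [i j | E v | p IH | p IHp q IHq | x p IH] s s' f B hg hfv /=.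
- have [_ [finj _]] := hg.
  have [hi ei] := hfv i (mem_head _ _).
  have := hfv j; rewrite !in_cons eqxx orbT => /(_ isT) [hj ej].
  rewrite ei ej; split; first by move=> ->.
  by apply: finj.
- have [_ [_ frel]] := hg.
  have hv : forall k, s (v k) \in B /\ s' (v k) = f (s (v k)).
    by move=> k; apply: hfv; apply: map_f; rewrite mem_enum.
  have -> : (fun k => s' (v k)) = (fun k => f (s (v k))).
    by apply: funext => k; have [] := hv k.
  rewrite (frel E (fun k => s (v k))) //; by move=> k; have [] := hv k.
- by rewrite (IH s s' f B hg hfv).
- rewrite (IHp s s' f B hg) ?(IHq s s' f B hg) //.
    by move=> i hi; apply: hfv; rewrite mem_cat hi orbT.
  by move=> i hi; apply: hfv; rewrite mem_cat hi.
- split.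
  + move=> [m hm].
    have [g [C [hgC BC mC geq]]] := forth _ _ m hg.
    exists (g m); refine ((IH _ _ g C hgC _).1 hm) => i hi.
    case: eqP => [_|/eqP ne]; first by [].
    have := hfv i; rewrite mem_filter /= ne hi => /(_ isT) [h1 h2].
    by split; [apply: (fsubsetP BC)|rewrite h2 geq].
  + move=> [m hm].
    have [hg' hinv] := back _ _ hg.
    have [g [C [hgC BC mC geq]]] := forth _ _ m hg'.
    exists (g m).
    refine ((IH (fun i => if i == x then m else s' i) (fun i => if i == x then g m else s i) g C hgC _).1 hm) => i hi.
    case: eqP => [_|/eqP ne]; first by [].
    have := hfv i; rewrite mem_filter /= ne hi => /(_ isT) [h1 h2].
    have hy : s' i \in f @` B by rewrite h2; apply: in_imfset.
    have [h3 h4] := hinv _ hy.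
    split; first by apply: (fsubsetP BC).
    have [_ [finj _]] := hg.
    rewrite geq //; rewrite h2 in h3 h4 *; apply: finj => //.
Qed.
End S2.


Arguments FEq {L ar}.
Arguments FRel {L ar}.
Arguments FNot {L ar}.
Arguments FAnd {L ar}.
Arguments FEx {L ar}.

Section S3.
Variables (L : finType) (ar : L -> nat).
Variables (M : choiceType) (rM : interp ar M).
Local Notation form := (Defs.form ar).

Definition ftop : form := FEx 0%nat (FEq 0%nat 0%nat).

Fixpoint bigAnd (l : seq form) : form :=
  match l with [::] => ftop | p :: l' => FAnd p (bigAnd l') end.

Fixpoint exs (a k : nat) (p : form) : form :=
  match k with 0%nat => p | k'.+1 => FEx a (exs a.+1 k' p) end.

Definition bnd (b : nat) (p : form) := all (fun i => (i < b)%nat) (fv p).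

Lemma sat_top s : sat rM s ftop.
Proof. by exists (s 0%nat). Qed.

Lemma sat_bigAnd (X : eqType) (F : X -> form) s xs :
  sat rM s (bigAnd (map F xs)) <-> (forall x, x \in xs -> sat rM s (F x)).
Proof.
elim: xs => [|x xs IH] /=; first by split => // _; apply: sat_top.
split.
  move=> [h1 /IH h2] y; rewrite in_cons => /orP [/eqP -> //|]; exact: h2.
move=> h; split; first by apply: h; rewrite mem_head.
by apply/IH => y hy; apply: h; rewrite in_cons hy orbT.
Qed.

Lemma bnd_bigAnd (X : eqType) (F : X -> form) b xs :
  (forall x, x \in xs -> bnd b (F x)) -> bnd b (bigAnd (map F xs)).
Proof.
elim: xs => [|x xs IH] /=; first by [].
move=> h; rewrite /bnd /= all_cat; apply/andP; split.
  by apply: h; rewrite mem_head.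
by apply: IH => y hy; apply: h; rewrite in_cons hy orbT.
Qed.

Lemma bnd_exs a k p : bnd (a + k) p -> bnd a (exs a k p).
Proof.
elim: k a p => [|k IH] a p /=; first by rewrite addn0.
move=> h; have := IH a.+1 p; rewrite addSnnS => /(_ h).
rewrite /bnd /= all_filter => /allP hall; apply/allP => i hi.
have := hall i hi; rewrite /=; case: (eqVneq i a) => [->|ne] //= h3; lia.
Qed.

Lemma sat_exs a k : forall s p, sat rM s (exs a k p) <->
  exists w : nat -> M, sat rM (fun i => if (a <= i < a + k)%nat then w i else s i) p.
Proof.
elim: k a => [|k IH] a s p /=.
  have e : forall w : nat -> M, (fun i => if (a <= i < a + 0)%nat then w i else s i) = s.
    by move=> w; apply: funext => i; rewrite addn0; case: (leqP a i) => h /=; rewrite ?andbF //; have -> : (i < a)%nat = false by lia.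
  split; first by move=> h; exists s; rewrite e.
  by move=> [w]; rewrite e.
split.
  move=> [m /IH [w hw]]; exists (fun i => if i == a then m else w i).
  suff <- : (fun i => if (a.+1 <= i < a.+1 + k)%nat then w i else if i == a then m else s i) =
            (fun i => if (a <= i < a + k.+1)%nat then (if i == a then m else w i) else s i) by [].
  apply: funext => i; case: (eqVneq i a) => [->|ne].
    by rewrite ltnn /= leqnn addnS ltnS leq_addr.
  have -> : (a.+1 <= i < a.+1 + k)%nat = (a <= i < a + k.+1)%nat by apply/idP/idP; lia.
  by [].
move=> [w hw]; exists (w a); apply/IH; exists w.
suff -> : (fun i => if (a.+1 <= i < a.+1 + k)%nat then w i else if i == a then w a else s i) =
            (fun i => if (a <= i < a + k.+1)%nat then w i else s i) by [].
apply: funext => i; case: (eqVneq i a) => [->|ne].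
  by rewrite ltnn /= leqnn addnS ltnS leq_addr.
have -> : (a.+1 <= i < a.+1 + k)%nat = (a <= i < a + k.+1)%nat by apply/idP/idP; lia.
by [].
Qed.
End S3.
Arguments ftop {L ar}.
Arguments bigAnd {L ar}.
Arguments exs {L ar}.
Arguments bnd {L ar}.


Section S4.
Variables (L : finType) (ar : L -> nat) (alpha : L -> R).
Hypothesis apos : forall E, 0 <= alpha E.
Variables (M : choiceType) (rM : interp ar M).
Hypothesis hM : model_S alpha rM.
Hypothesis hd : forall A : {fset M}, dM alpha rM A = 0.
Hypothesis hcl : finite_closures alpha rM.
Local Notation form := (Defs.form ar).


Lemma main : atomic rM.
Proof.
move=> n s.
pose A := [fset s i | i in iota 0 n].
have hA : forall i, (i < n)%nat -> s i \in A.
  by move=> i hi; apply: in_imfset; rewrite /= mem_iota.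
have [C [AC hC0]] := closure_ex _ _ _ apos _ rM hM hd hcl A.
pose c := enum_fset C. pose k := size c. pose x0 := s 0%nat.
have hsC : forall i, (i < n)%nat -> s i \in c by move=> i /hA /(fsubsetP AC).
have hidx : forall y, y \in c -> (index y c < k)%nat by move=> y; rewrite index_mem.
have huniq : uniq c by apply: fset_uniq.
pose eqs : form := bigAnd (map (fun i => FEq i (n + index (s i) c)%nat) (iota 0 n)).
pose neqs : form := bigAnd (map (fun j1 => bigAnd (map (fun j2 =>
   if j1 == j2 then ftop else FNot (FEq (n + j1)%nat (n + j2)%nat)) (iota 0 k))) (iota 0 k)).
pose lit (E : L) (v : {ffun 'I_(ar E) -> 'I_k}) : form :=
  if rM E (fun a => nth x0 c (v a)) then FRel E (fun a => (n + v a)%nat)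
  else FNot (FRel E (fun a => (n + v a)%nat)).
pose rels : form := bigAnd (map (fun E => bigAnd (map (lit E) (enum {ffun 'I_(ar E) -> 'I_k}))) (enum L)).
pose body : form := FAnd eqs (FAnd neqs rels).
exists (exs n k body); split; last split.
- change (bnd n (exs n k body)); apply: bnd_exs.
  rewrite /bnd /= !all_cat; apply/and3P; split.
  + apply: bnd_bigAnd => i; rewrite mem_iota => /andP [_ hi].
    rewrite /bnd /= andbT; have := hidx _ (hsC _ hi); lia.
  + apply: bnd_bigAnd => j1; rewrite mem_iota => /andP [_ h1].
    apply: bnd_bigAnd => j2; rewrite mem_iota => /andP [_ h2].
    case: eqP => _; first by [].
    rewrite /bnd /= andbT; lia.
  + apply: bnd_bigAnd => E _; apply: bnd_bigAnd => v _.
    rewrite /lit; case: ifP => _; rewrite /bnd /= all_map; apply/allP => a _ /=.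
    by rewrite ltn_add2l. by rewrite ltn_add2l.
- apply/sat_exs; exists (fun i => nth x0 c (i - n)); split; last split.
  + apply/sat_bigAnd => i; rewrite mem_iota add0n => /andP [_ hi] /=.
    have hj := hidx _ (hsC _ hi).
    have -> : (n <= i < n + k)%nat = false by lia.
    have -> : (n <= n + index (s i) c < n + k)%nat = true by lia.
    by rewrite addKn nth_index // hsC.
  + apply/sat_bigAnd => j1; rewrite mem_iota add0n => /andP [_ h1].
    apply/sat_bigAnd => j2; rewrite mem_iota add0n => /andP [_ h2].
    case: eqP => ne; first exact: sat_top.
    rewrite /=.
    have -> : (n <= n + j1 < n + k)%nat = true by lia.
    have -> : (n <= n + j2 < n + k)%nat = true by lia.
    rewrite !addKn => /eqP; rewrite nth_uniq // => /eqP; exact: ne.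
  + apply/sat_bigAnd => E _; apply/sat_bigAnd => v _.
    have e : (fun a => if (n <= n + v a < n + k)%nat then nth x0 c (n + v a - n) else s (n + v a)) =
             (fun a => nth x0 c (v a)).
      by apply: funext => a; rewrite ltn_add2l ltn_ord leq_addr addKn.
    rewrite /lit; case: ifP => h /=; rewrite e ?h //.
- move=> psi hpsi hs s' /sat_exs [w [heqs [hneqs hrels]]].
  pose g := fun y => w (n + index y c)%nat.
  have hsg : forall i, (i < n)%nat -> s' i = g (s i).
    move=> i hi; move/sat_bigAnd: heqs => /(_ i); rewrite mem_iota add0n hi /=.
    have hj := hidx _ (hsC _ hi).
    have -> : (n <= i < n + k)%nat = false by lia.
    have -> : (n <= n + index (s i) c < n + k)%nat = true by lia.
    by move=> /(_ isT).
  have hg : good L ar alpha M rM g C.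
    split; first exact: hC0.
    split.
      move=> y1 y2 hy1 hy2 e.
      have h1 := hidx y1 hy1; have h2 := hidx y2 hy2.
      case: (eqVneq (index y1 c) (index y2 c)) => [ei|ne].
        by rewrite -(nth_index x0 hy1) -(nth_index x0 hy2) ei.
      move/sat_bigAnd: hneqs => /(_ (index y1 c)); rewrite mem_iota add0n h1 /=.
      move=> /(_ isT) /sat_bigAnd /(_ (index y2 c)); rewrite mem_iota add0n h2 /=.
      rewrite (negbTE ne) /=.
      have -> : (n <= n + index y1 c < n + k)%nat = true by lia.
      have -> : (n <= n + index y2 c < n + k)%nat = true by lia.
      by move=> /(_ isT); case.
    move=> E t ht.
    have hk : forall a, (index (t a) c < k)%nat by move=> a; apply: hidx; apply: ht.
    pose v : {ffun 'I_(ar E) -> 'I_k} := [ffun a => Ordinal (hk a)].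
    move/sat_bigAnd: hrels => /(_ E (mem_enum _ _)) /sat_bigAnd /(_ v (mem_enum _ _)).
    have e1 : (fun a => nth x0 c (v a)) = t.
      by apply: funext => a; rewrite /v ffunE /= nth_index //; apply: ht.
    have e2 : (fun a => if (n <= n + v a < n + k)%nat then w (n + v a)%nat else s' (n + v a)%nat) =
              (fun a => g (t a)).
      by apply: funext => a; rewrite /v ffunE /= ltn_add2l hk leq_addr.
    rewrite /lit e1; case: ifP => h /=; rewrite e2 ?h //.
    by move/negP/negbTE.
  apply: (transfer _ _ _ apos _ rM hM hd hcl psi s s' g C hg _).1 hs.
  move=> i hi; have hin : (i < n)%nat by move/allP: hpsi => /(_ i hi).
  split; first exact: (fsubsetP AC _ (hA _ hin)).
  exact: hsg.
Qed.
End S4.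

Theorem lemma5p8
  (L : finType) (ar : L -> nat) (har : forall E : L, leq 2 (ar E))
  (alpha : L -> R) (halpha : forall E : L, 0 < alpha E <= 1)
  (hnontriv : ~ (forall E : L, ar E = 2%nat /\ alpha E = 1))
  (M : choiceType) (rM : interp ar M)
  (hM : model_S alpha rM)
  (hd : forall A : {fset M}, dM alpha rM A = 0)
  (hcl : finite_closures alpha rM) :
  atomic rM.
Proof.
have apos : forall E, 0 <= alpha E by move=> E; have /andP [h _] := halpha E; exact: ltW.
exact: (main _ _ _ apos _ rM hM hd hcl).
Qed.
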